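(* Let $b>a>0$ and define $g_{a,b}:\mathbb{R}\to(0,\infty)$ by $g_{a,b}(t)=\frac{b^t-a^t}{t}$ for $t\neq0$ and $g_{a,b}(0)=b-a$. Then: (i) $g_{a,b}$ is logarithmically convex on $(-\infty,\infty)$, i.e. $[\ln g_{a,b}(t)]''\ge 0$ for all $t\in\mathbb{R}$; (ii) $g_{a,b}$ is $3$-log-convex on $(-\infty,0)$ and $3$-log-concave on $(0,\infty)$, i.e. $[\ln g_{a,b}(t)]'''\ge0$ for $t<0$ and $[\ln g_{a,b}(t)]'''\le0$ for $t>0$; (iii) the function $$h_{a,b}(t)=\begin{cases}\dfrac{b^t\ln b-a^t\ln a}{b^t-a^t}-\dfrac1t,& t\neq0,\\[0.5em] \ln\sqrt{ab},& t=0\end{cases}$$ (which equals $[\ln g_{a,b}(t)]'$) is increasing on $(-\infty,\infty)$ and satisfies $\lim_{t\to-\infty}h_{a,b}(t)=\ln a$ and $\lim_{t\to\infty}h_{a,b}(t)=\ln b$.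
   Context: A $k$-times differentiable function $f>0$ on an interval $I$ is called $k$-log-convex on $I$ if $[\ln f(t)]^{(k)}\ge0$ on $I$, and $k$-log-concave on $I$ if $[\ln f(t)]^{(k)}\le0$ on $I$. Logarithmic convexity means $2$-log-convexity. *)

(* Defs.v *)
From Stdlib Require Import Reals.
Open Scope R_scope.

(* g_{a,b}(t) = (b^t - a^t)/t for t <> 0, and its continuous value
   ln b - ln a at t = 0. *)
Definition g_ab (a b t : R) : R :=
  if Req_EM_T t 0 then ln b - ln a
  else (Rpower b t - Rpower a t) / t.

Definition h_ab (a b t : R) : R :=
  if Req_EM_T t 0 then ln (sqrt (a * b))
  else (Rpower b t * ln b - Rpower a t * ln a) / (Rpower b t - Rpower a t) - 1 / t.

Definition lng_ab (a b t : R) : R := ln (g_ab a b t).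

(* Main.v *)
Require Import Defs.
From Stdlib Require Import Reals Lra Lia Psatz FunctionalExtensionality.
Open Scope R_scope.


Notation dpl := derivable_pt_lim.

Lemma D_eq f x l l' : dpl f x l -> l = l' -> dpl f x l'.
Proof. intros H ->; exact H. Qed.

Lemma D_ext f g x l : (forall y, f y = g y) -> dpl f x l -> dpl g x l.
Proof. intros H. assert (f = g) by (apply functional_extensionality; auto). subst; auto. Qed.

Lemma D_plus f g x lf lg : dpl f x lf -> dpl g x lg -> dpl (fun y => f y + g y) x (lf + lg).
Proof. intros; apply (derivable_pt_lim_plus f g); auto. Qed.
Lemma D_minus f g x lf lg : dpl f x lf -> dpl g x lg -> dpl (fun y => f y - g y) x (lf - lg).
Proof. intros; apply (derivable_pt_lim_minus f g); auto. Qed.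
Lemma D_mult f g x lf lg : dpl f x lf -> dpl g x lg -> dpl (fun y => f y * g y) x (lf * g x + f x * lg).
Proof. intros; apply (derivable_pt_lim_mult f g); auto. Qed.
Lemma D_div f g x lf lg : dpl f x lf -> dpl g x lg -> g x <> 0 ->
  dpl (fun y => f y / g y) x ((lf * g x - lg * f x) / (g x * g x)).
Proof. intros. eapply D_eq. apply (derivable_pt_lim_div f g x lf lg); auto. unfold Rsqr; reflexivity. Qed.
Lemma D_comp f g x lf lg : dpl f x lf -> dpl g (f x) lg -> dpl (fun y => g (f y)) x (lg * lf).
Proof. intros; apply (derivable_pt_lim_comp f g); auto. Qed.
Lemma D_const a x : dpl (fun _ => a) x 0.
Proof. apply derivable_pt_lim_const. Qed.
Lemma D_id x : dpl (fun y => y) x 1.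
Proof. apply derivable_pt_lim_id. Qed.
Lemma D_exp x : dpl exp x (exp x).
Proof. apply derivable_pt_lim_exp. Qed.
Lemma D_ln x : 0 < x -> dpl ln x (/ x).
Proof. apply derivable_pt_lim_ln. Qed.

Lemma D_local f g x l : (exists del, 0 < del /\ forall y, Rabs (y - x) < del -> f y = g y) ->
  dpl g x l -> dpl f x l.
Proof.
  intros [del [Hd Hfg]] Hg eps He. destruct (Hg eps He) as [d Hd'].
  assert (0 < Rmin d del) by (apply Rmin_pos; [apply cond_pos|lra]).
  exists (mkposreal _ H). simpl. intros h Hh Hlt.
  rewrite !Hfg. apply Hd'; auto. apply Rlt_le_trans with (1:=Hlt); apply Rmin_l.
  rewrite Rminus_diag, Rabs_R0; lra.
  replace (x + h - x) with h by ring. apply Rlt_le_trans with (1:=Hlt); apply Rmin_r.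
Qed.

Lemma near_nz x : x <> 0 -> exists del, 0 < del /\ forall y, Rabs (y - x) < del -> y <> 0.
Proof.
  intros Hx. exists (Rabs x). split. apply Rabs_pos_lt; auto.
  intros y Hy Hy0. subst. rewrite Rminus_0_l, Rabs_Ropp in Hy. lra.
Qed.

Lemma mono_lt f f' a b : (forall x, dpl f x (f' x)) -> (forall x, a < x < b -> 0 < f' x) ->
  a < b -> f a < f b.
Proof.
  intros Hd Hp Hab. destruct (MVT_cor2 f f' a b Hab) as [c [Hc Hc2]]. intros; auto.
  assert (0 < f' c * (b - a)) by (apply Rmult_lt_0_compat; [apply Hp; auto|lra]). lra.
Qed.
Lemma mono_le f f' a b : (forall x, dpl f x (f' x)) -> (forall x, a < x < b -> 0 <= f' x) ->
  a <= b -> f a <= f b.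
Proof.
  intros Hd Hp Hab. destruct Hab as [Hab| ->]; [|lra].
  destruct (MVT_cor2 f f' a b Hab) as [c [Hc Hc2]]. intros; auto.
  assert (0 <= f' c * (b - a)) by (apply Rmult_le_pos; [apply Hp; auto|lra]). lra.
Qed.

Lemma cmvt f g f' g' a b : a < b ->
  (forall c, a < c < b -> dpl f c (f' c)) -> (forall c, a < c < b -> dpl g c (g' c)) ->
  (forall c, a <= c <= b -> continuity_pt f c) -> (forall c, a <= c <= b -> continuity_pt g c) ->
  exists c, a < c < b /\ (g b - g a) * f' c = (f b - f a) * g' c.
Proof.
  intros Hab Hf Hg Cf Cg.
  pose (p1 := fun c (P : a < c < b) => exist (fun l => derivable_pt_abs f c l) (f' c) (Hf c P) : derivable_pt f c).
  pose (p2 := fun c (P : a < c < b) => exist (fun l => derivable_pt_abs g c l) (g' c) (Hg c P) : derivable_pt g c).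
  destruct (MVT f g a b p1 p2 Hab Cf Cg) as [c [P HP]].
  exists c; split; auto.
Qed.

Definition L0 f l := limit1_in f (fun x => x <> 0) l 0.

Lemma L0_ext f g l : (forall x, x <> 0 -> f x = g x) -> L0 f l -> L0 g l.
Proof.
  unfold L0, limit1_in, limit_in; simpl; intros H Hf eps He.
  destruct (Hf eps He) as [a [Ha Hx]]. exists a; split; auto.
  intros x [Hx0 Hd]. rewrite <- H; auto.
Qed.

Lemma L0_cont f : continuity_pt f 0 -> L0 f (f 0).
Proof.
  unfold L0, continuity_pt, continue_in, limit1_in, limit_in, D_x, no_cond; simpl.
  intros H eps He. destruct (H eps He) as [a [Ha Hx]]. exists a; split; auto.
  intros x [Hx0 Hd]. apply Hx. split; auto.
Qed.

Lemma cont_L0 f : L0 f (f 0) -> continuity_pt f 0.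
Proof.
  unfold L0, continuity_pt, continue_in, limit1_in, limit_in, D_x, no_cond; simpl.
  intros H eps He. destruct (H eps He) as [a [Ha Hx]]. exists a; split; auto.
  intros x [[_ Hx0] Hd]. apply Hx. split; auto.
Qed.

Lemma L0_comp_cont F u l : continuity_pt F l -> L0 u l -> L0 (fun x => F (u x)) (F l).
Proof.
  unfold L0, continuity_pt, continue_in, limit1_in, limit_in, D_x, no_cond; simpl.
  intros HF Hu eps He. destruct (HF eps He) as [a [Ha Hx]].
  destruct (Hu a Ha) as [b [Hb Hy]]. exists b; split; auto.
  intros x [Hx0 Hd]. destruct (Req_dec (u x) l) as [E|E].
  rewrite E, Rdist_eq; auto.
  apply Hx. split; auto.
Qed.

Lemma L0_deriv F l : dpl F 0 l -> L0 (fun x => (F x - F 0) / x) l.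
Proof.
  unfold L0, limit1_in, limit_in; simpl; unfold Rdist. intros H eps He.
  destruct (H eps He) as [d Hd]. exists d; split. apply cond_pos.
  intros x [Hx0 Hlt]. rewrite Rminus_0_r in Hlt. specialize (Hd x Hx0 Hlt).
  rewrite Rplus_0_l in Hd; auto.
Qed.

Lemma deriv_L0 F l : L0 (fun x => (F x - F 0) / x) l -> dpl F 0 l.
Proof.
  unfold L0, limit1_in, limit_in; simpl; unfold Rdist. intros H eps He.
  destruct (H eps He) as [d [Hd Hx]]. exists (mkposreal d Hd). simpl.
  intros h Hh Hlt. rewrite Rplus_0_l. apply Hx. rewrite Rminus_0_r; auto.
Qed.

Lemma lhop f g f' g' l :
  f 0 = 0 -> g 0 = 0 -> continuity_pt f 0 -> continuity_pt g 0 ->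
  (forall x, x <> 0 -> dpl f x (f' x)) -> (forall x, x <> 0 -> dpl g x (g' x)) ->
  (forall x, x <> 0 -> g x <> 0) -> (forall x, x <> 0 -> g' x <> 0) ->
  L0 (fun x => f' x / g' x) l -> L0 (fun x => f x / g x) l.
Proof.
  intros f0 g0 cf cg Df Dg gnz g'nz H.
  assert (Cf : forall c, continuity_pt f c).
  { intro c. destruct (Req_dec c 0) as [->|Hc]; auto.
    apply derivable_continuous_pt. exists (f' c). apply Df; auto. }
  assert (Cg : forall c, continuity_pt g c).
  { intro c. destruct (Req_dec c 0) as [->|Hc]; auto.
    apply derivable_continuous_pt. exists (g' c). apply Dg; auto. }
  unfold L0, limit1_in, limit_in in *; simpl in *; unfold Rdist in *.
  intros eps He. destruct (H eps He) as [d [Hd Hx]]. exists d; split; auto.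
  intros x [Hx0 Hlt]. rewrite Rminus_0_r in Hlt.
  destruct (Rlt_or_le 0 x) as [Hp|Hn].
  - destruct (cmvt f g f' g' 0 x Hp) as [c [Hc Heq]].
    intros; apply Df; lra. intros; apply Dg; lra. intros; auto. intros; auto.
    rewrite f0, g0, !Rminus_0_r in Heq.
    assert (c <> 0) by lra. assert (g' c <> 0) by auto. assert (g x <> 0) by auto.
    replace (f x / g x) with (f' c / g' c).
    apply Hx. split; auto. rewrite Rminus_0_r. rewrite Rabs_right by lra.
    rewrite Rabs_right in Hlt by lra. lra.
    field_simplify_eq; auto. lra.
  - assert (Hn' : x < 0) by lra.
    destruct (cmvt f g f' g' x 0 Hn') as [c [Hc Heq]].
    intros; apply Df; lra. intros; apply Dg; lra. intros; auto. intros; auto.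
    rewrite f0, g0 in Heq.
    assert (c <> 0) by lra. assert (g' c <> 0) by auto. assert (g x <> 0) by auto.
    replace (f x / g x) with (f' c / g' c).
    apply Hx. split; auto. rewrite Rminus_0_r. rewrite Rabs_left by lra.
    rewrite Rabs_left in Hlt by lra. lra.
    field_simplify_eq; auto. lra.
Qed.

Lemma ext_deriv F F' l : continuity_pt F 0 -> (forall x, x <> 0 -> dpl F x (F' x)) ->
  L0 F' l -> dpl F 0 l.
Proof.
  intros cF DF HL. apply deriv_L0.
  apply (lhop (fun x => F x - F 0) (fun x => x) F' (fun _ => 1)).
  ring. ring.
  apply continuity_pt_minus; auto. apply continuity_pt_const; intros ? ?; auto.
  apply derivable_continuous_pt, derivable_pt_id.
  intros. eapply D_eq. apply D_minus. apply DF; auto. apply D_const. ring.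
  intros. apply D_id. auto. intros; lra.
  eapply L0_ext; [|exact HL]. intros; simpl; field.
Qed.


Definition sh x := (exp x - exp (- x)) / 2.
Definition ch x := (exp x + exp (- x)) / 2.

Lemma D_expm x : dpl (fun y => exp (- y)) x (- exp (- x)).
Proof.
  eapply D_eq. apply (D_comp (fun y => - y) exp). 
  apply (derivable_pt_lim_opp (fun y => y)). apply D_id. apply D_exp. ring.
Qed.
Lemma D_sh x : dpl sh x (ch x).
Proof.
  unfold sh, ch. eapply D_eq. apply (D_div (fun y => exp y - exp (- y)) (fun _ => 2)).
  apply D_minus. apply D_exp. apply D_expm. apply D_const. lra. field.
Qed.
Lemma D_ch x : dpl ch x (sh x).
Proof.
  unfold sh, ch. eapply D_eq. apply (D_div (fun y => exp y + exp (- y)) (fun _ => 2)).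
  apply D_plus. apply D_exp. apply D_expm. apply D_const. lra. field.
Qed.

Lemma expm_inv x : exp (- x) * exp x = 1.
Proof. rewrite <- exp_plus. replace (-x + x) with 0 by ring. apply exp_0. Qed.

Lemma chsh x : ch x * ch x - sh x * sh x = 1.
Proof. rewrite <- (expm_inv x). unfold ch, sh. field. Qed.

Lemma sh0 : sh 0 = 0.
Proof. unfold sh. rewrite Ropp_0. field. Qed.
Lemma ch0 : ch 0 = 1.
Proof. unfold ch. rewrite Ropp_0, exp_0. field. Qed.
Lemma sh_opp x : sh (- x) = - sh x.
Proof. unfold sh. rewrite Ropp_involutive. field. Qed.
Lemma ch_opp x : ch (- x) = ch x.
Proof. unfold ch. rewrite Ropp_involutive. field. Qed.

Lemma sh_pos x : 0 < x -> 0 < sh x.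
Proof. intros. unfold sh. pose proof (exp_increasing (-x) x). lra. Qed.
Lemma sh_neg x : x < 0 -> sh x < 0.
Proof. intros. unfold sh. pose proof (exp_increasing x (-x)). lra. Qed.
Lemma sh_nz x : x <> 0 -> sh x <> 0.
Proof. intros. destruct (Rlt_or_le x 0). pose proof (sh_neg x); lra. pose proof (sh_pos x); lra. Qed.
Lemma ch_pos x : 0 < ch x.
Proof. unfold ch. pose proof (exp_pos x). pose proof (exp_pos (-x)). lra. Qed.
Lemma ch_gt1 x : x <> 0 -> 1 < ch x.
Proof.
  intros Hx. unfold ch. pose proof (expm_inv x). pose proof (exp_pos x).
  assert (exp x <> 1). { intro E. apply Hx. apply exp_inv. rewrite exp_0; auto. }
  assert (exp (-x) = / exp x) by (apply exp_Ropp). rewrite H2.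
  assert (0 < (exp x - 1) * (exp x - 1)) by (apply Rsqr_pos_lt; lra).
  apply Rmult_lt_reg_r with (exp x * 2). nra.
  field_simplify; [|lra]. nra.
Qed.

Lemma sh_gt x : 0 < x -> x < sh x.
Proof.
  intros Hx. pose proof (mono_lt (fun y => sh y - y) (fun y => ch y - 1) 0 x) as H.
  simpl in H. rewrite sh0 in H. enough (0 - 0 < sh x - x) by lra. apply H; auto.
  intros. eapply D_eq. apply D_minus. apply D_sh. apply D_id. ring.
  intros y Hy. pose proof (ch_gt1 y). lra.
Qed.

Lemma sh_sq_gt x : x <> 0 -> x * x < sh x * sh x.
Proof.
  intros Hx. destruct (Rlt_or_le x 0).
  - pose proof (sh_gt (-x)). rewrite sh_opp in H0. nra.
  - pose proof (sh_gt x). nra.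
Qed.


Ltac rg := cbv beta; ring.
Definition Sx x := sh x / x.
Definition phi x := if Req_EM_T x 0 then 0 else ln (Sx x).
Definition p1 x := if Req_EM_T x 0 then 0 else ch x / sh x - 1 / x.
Definition p2 x := if Req_EM_T x 0 then 1/3 else 1 / (x * x) - 1 / (sh x * sh x).
Definition p3 x := -2 / (x * x * x) + 2 * ch x / (sh x * sh x * sh x).

Lemma dcont f x l : dpl f x l -> continuity_pt f x.
Proof. intros H. apply derivable_continuous_pt. exists l; exact H. Qed.



Lemma L0_cont' f l : continuity_pt f 0 -> f 0 = l -> L0 f l.
Proof. intros H <-. apply L0_cont; auto. Qed.

Lemma S_pos x : x <> 0 -> 0 < Sx x.
Proof.
  intros Hx. unfold Sx. destruct (Rlt_or_le x 0).
  - pose proof (sh_neg x H). replace (sh x / x) with ((- sh x) / (- x)) by (field; auto).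
    apply Rdiv_lt_0_compat; lra.
  - pose proof (sh_pos x). apply Rdiv_lt_0_compat; lra.
Qed.

Lemma LS : L0 Sx 1.
Proof.
  pose proof (L0_deriv sh (ch 0) (D_sh 0)). rewrite ch0 in H.
  eapply L0_ext; [|exact H]. intros. unfold Sx. rewrite sh0. f_equal; rg.
Qed.

Lemma Lp1 : L0 p1 0.
Proof.
  assert (HN : L0 (fun x => (x * ch x - sh x) / (x * x)) 0).
  { apply (lhop _ _ (fun x => x * sh x) (fun x => 2 * x)).
    cbv beta; rewrite sh0; rg. cbv beta; rg.
    apply (dcont _ _ (1 * ch 0 + 0 * sh 0 - ch 0)). apply D_minus. apply D_mult. apply D_id. apply D_ch. apply D_sh.
    apply (dcont _ _ (1 * 0 + 0 * 1)). apply D_mult; apply D_id.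
    intros. eapply D_eq. apply D_minus. apply D_mult. apply D_id. apply D_ch. apply D_sh. rg.
    intros. eapply D_eq. apply D_mult; apply D_id. rg.
    intros. apply Rmult_integral_contrapositive; auto.
    intros. lra.
    apply (L0_ext (fun x => sh x / 2)). intros; field; auto.
    apply L0_cont'. 2: cbv beta; rewrite sh0; field. apply (dcont _ _ (ch 0 / 2)). eapply D_eq. apply (D_div sh (fun _ => 2)). apply D_sh.
    apply D_const. lra. field. }
  pose proof (limit_mul _ _ _ _ _ _ HN (limit_inv _ _ _ _ LS ltac:(lra))).
  rewrite Rmult_0_l in H. eapply L0_ext; [|exact H].
  intros x Hx. unfold p1, Sx. destruct (Req_EM_T x 0); [contradiction|].
  pose proof (sh_nz x Hx). field; auto.
Qed.

Lemma Lp2 : L0 p2 (1/3).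
Proof.
  assert (H1 : L0 (fun x => (2 * sh x * ch x - 2 * x) / (4 * (x * x * x))) (1/3)).
  { apply (lhop _ _ (fun x => 2 * (ch x * ch x + sh x * sh x) - 2) (fun x => 12 * (x * x))).
    cbv beta; rewrite sh0; rg. cbv beta; rg.
    apply (dcont _ _ (2 * (ch 0 * ch 0 + sh 0 * sh 0) - 2)). eapply D_eq. apply D_minus.
    apply D_mult. apply D_mult. apply D_const. apply D_sh. apply D_ch. apply D_mult; [apply D_const|apply D_id]. rg.
    apply (dcont _ _ 0). eapply D_eq. apply D_mult. apply D_const. apply D_mult. apply D_mult; apply D_id. apply D_id. rg.
    intros. eapply D_eq. apply D_minus.
    apply D_mult. apply D_mult. apply D_const. apply D_sh. apply D_ch. apply D_mult; [apply D_const|apply D_id]. rg.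
    intros. eapply D_eq. apply D_mult. apply D_const. apply D_mult. apply D_mult; apply D_id. apply D_id. rg.
    intros; cbv beta; repeat (apply Rmult_integral_contrapositive; split); auto; lra.
    intros; cbv beta; repeat (apply Rmult_integral_contrapositive; split); auto; lra.
    pose proof (limit_mul _ _ _ _ _ _ LS LS). rewrite Rmult_1_l in H.
    pose proof (limit_mul _ _ _ _ _ _ (limit_free (fun _ => 1/3) _ 0 0) H). simpl in H0.
    rewrite Rmult_1_r in H0. eapply L0_ext; [|exact H0].
    intros x Hx. unfold Sx. pose proof (chsh x). replace (ch x * ch x) with (1 + sh x * sh x) by lra.
    field; auto. }
  assert (H2 : L0 (fun x => (sh x * sh x - x * x) / (x * x * x * x)) (1/3)).
  { apply (lhop _ _ (fun x => 2 * sh x * ch x - 2 * x) (fun x => 4 * (x * x * x))).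
    cbv beta; rewrite sh0; rg. cbv beta; rg.
    apply (dcont _ _ (ch 0 * sh 0 + sh 0 * ch 0 - (1 * 0 + 0 * 1))). apply D_minus. apply D_mult; apply D_sh.
    apply D_mult; apply D_id.
    apply (dcont _ _ 0). eapply D_eq. apply D_mult. apply D_mult. apply D_mult; apply D_id. apply D_id. apply D_id. rg.
    intros. eapply D_eq. apply D_minus. apply D_mult; apply D_sh. apply D_mult; apply D_id. rg.
    intros. eapply D_eq. apply D_mult. apply D_mult. apply D_mult; apply D_id. apply D_id. apply D_id. rg.
    intros; cbv beta; repeat (apply Rmult_integral_contrapositive; split); auto; lra.
    intros; cbv beta; repeat (apply Rmult_integral_contrapositive; split); auto; lra.
    exact H1. }
  pose proof (limit_mul _ _ _ _ _ _ LS LS). rewrite Rmult_1_l in H.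
  pose proof (limit_mul _ _ _ _ _ _ H2 (limit_inv _ _ _ _ H ltac:(lra))).
  rewrite Rinv_1, Rmult_1_r in H0. eapply L0_ext; [|exact H0].
  intros x Hx. unfold p2, Sx. destruct (Req_EM_T x 0); [contradiction|].
  pose proof (sh_nz x Hx). field; auto.
Qed.


Lemma chsh' x : sh x * sh x - ch x * ch x = -1.
Proof. pose proof (chsh x); lra. Qed.

Lemma Dphi_nz x : x <> 0 -> dpl phi x (p1 x).
Proof.
  intros Hx. apply (D_local _ (fun y => ln (Sx y))).
  { destruct (near_nz x Hx) as [d [Hd Hy]]. exists d; split; auto.
    intros y Hyx. unfold phi. destruct (Req_EM_T y 0); auto. exfalso; eapply Hy; eauto. }
  pose proof (S_pos x Hx). pose proof (sh_nz x Hx).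
  eapply D_eq. apply (D_comp Sx ln). unfold Sx. apply D_div. apply D_sh. apply D_id. auto.
  apply D_ln; auto.
  unfold p1, Sx. destruct (Req_EM_T x 0); [contradiction|]. field; auto.
Qed.

Lemma Dp1_nz x : x <> 0 -> dpl p1 x (p2 x).
Proof.
  intros Hx. apply (D_local _ (fun y => ch y / sh y - 1 / y)).
  { destruct (near_nz x Hx) as [d [Hd Hy]]. exists d; split; auto.
    intros y Hyx. unfold p1. destruct (Req_EM_T y 0); auto. exfalso; eapply Hy; eauto. }
  pose proof (sh_nz x Hx).
  eapply D_eq. apply D_minus. apply D_div. apply D_ch. apply D_sh. auto.
  apply D_div. apply D_const. apply D_id. auto.
  rewrite chsh'. unfold p2. destruct (Req_EM_T x 0); [contradiction|]. field; auto.
Qed.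

Lemma Dp2_nz x : x <> 0 -> dpl p2 x (p3 x).
Proof.
  intros Hx. apply (D_local _ (fun y => 1 / (y * y) - 1 / (sh y * sh y))).
  { destruct (near_nz x Hx) as [d [Hd Hy]]. exists d; split; auto.
    intros y Hyx. unfold p2. destruct (Req_EM_T y 0); auto. exfalso; eapply Hy; eauto. }
  pose proof (sh_nz x Hx).
  eapply D_eq. apply D_minus. apply D_div. apply D_const. apply D_mult; apply D_id.
  apply Rmult_integral_contrapositive; auto.
  apply D_div. apply D_const. apply D_mult; apply D_sh. apply Rmult_integral_contrapositive; auto.
  unfold p3. field; auto.
Qed.

Lemma Dphi x : dpl phi x (p1 x).
Proof.
  destruct (Req_dec x 0) as [->|Hx]; [|apply Dphi_nz; auto].
  replace (p1 0) with 0 by (unfold p1; destruct (Req_EM_T 0 0); lra).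
  apply (ext_deriv phi p1 0); [| apply Dphi_nz | apply Lp1].
  apply cont_L0. replace (phi 0) with (ln 1).
  apply (L0_ext (fun x => ln (Sx x))). intros; unfold phi; destruct (Req_EM_T x 0); [contradiction|auto].
  apply L0_comp_cont. apply (dcont _ _ (/ 1)). apply D_ln; lra. apply LS.
  unfold phi; destruct (Req_EM_T 0 0); [apply ln_1|lra].
Qed.

Lemma Dp1 x : dpl p1 x (p2 x).
Proof.
  destruct (Req_dec x 0) as [->|Hx]; [|apply Dp1_nz; auto].
  replace (p2 0) with (1/3) by (unfold p2; destruct (Req_EM_T 0 0); lra).
  apply (ext_deriv p1 p2); [| apply Dp1_nz | apply Lp2].
  apply cont_L0. replace (p1 0) with 0. apply Lp1.
  unfold p1; destruct (Req_EM_T 0 0); lra.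
Qed.

Lemma p2_pos x : 0 < p2 x.
Proof.
  unfold p2. destruct (Req_EM_T x 0). lra.
  pose proof (sh_sq_gt x n). assert (0 < x * x) by nra.
  apply Rlt_0_minus. apply Rmult_lt_reg_r with (x * x * (sh x * sh x)). nra.
  pose proof (sh_nz x n). field_simplify; auto. nra.
Qed.

Lemma p1_incr s t : s < t -> p1 s < p1 t.
Proof.
  intros. apply (mono_lt p1 p2 s t); auto. apply Dp1. intros; apply p2_pos.
Qed.

Lemma cube_ineq x : 0 < x -> x * x * x * ch x <= sh x * sh x * sh x.
Proof.
  intros Hx.
  pose (E := fun y => exp (- (ln (ch y) / 3))).
  pose (k := fun y => sh y * E y - y).
  assert (DE : forall y, dpl E y (E y * (- (sh y / ch y / 3)))).
  { intro y. unfold E. eapply D_eq. apply (D_comp (fun z => - (ln (ch z) / 3)) exp).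
    apply (derivable_pt_lim_opp (fun z => ln (ch z) / 3)).
    apply (D_div (fun z => ln (ch z)) (fun _ => 3)). apply (D_comp ch ln). apply D_ch.
    apply D_ln, ch_pos. apply D_const. lra. apply D_exp.
    pose proof (ch_pos y). field. lra. }
  assert (Dk : forall y, dpl k y (ch y * E y + sh y * (E y * (- (sh y / ch y / 3))) - 1)).
  { intro y. unfold k. eapply D_eq. apply D_minus. apply D_mult. apply D_sh. apply DE. apply D_id. ring. }
  assert (Hk : k 0 <= k x).
  { apply (mono_le k _ 0 x Dk); [|lra]. intros y _.
    pose (u := exp (ln (ch y) / 3)). assert (Hu : 0 < u) by apply exp_pos.
    assert (Hu3 : u * u * u = ch y).
    { unfold u. rewrite <- !exp_plus. replace (ln (ch y) / 3 + ln (ch y) / 3 + ln (ch y) / 3) with (ln (ch y)) by field.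
      apply exp_ln, ch_pos. }
    assert (HE : E y = / u). { unfold E, u. apply exp_Ropp. }
    rewrite HE. pose proof (chsh y). pose proof (ch_pos y).
    replace (ch y * / u + sh y * (/ u * - (sh y / ch y / 3)) - 1) with
      ((3 * ch y * ch y - sh y * sh y - 3 * ch y * u) / (3 * ch y * u)) by (field; lra).
    replace (sh y * sh y) with (ch y * ch y - 1) by lra.
    unfold Rdiv; apply Rmult_le_pos; [|apply Rlt_le, Rinv_0_lt_compat; nra]. rewrite <- Hu3.
    assert (0 <= (u*u - 1) * (u*u-1)) by (apply (Rle_0_sqr (u*u-1))). assert (0 <= 2 * u * u + 1) by (pose proof (Rle_0_sqr u); unfold Rsqr in *; lra).
    assert (0 <= (u*u - 1) * (u*u-1) * (2 * u * u + 1)) by (apply Rmult_le_pos; auto).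
    nra. }
  unfold k in Hk. rewrite sh0 in Hk.
  pose (u := exp (ln (ch x) / 3)). assert (Hu : 0 < u) by apply exp_pos.
  assert (Hu3 : u * u * u = ch x).
  { unfold u. rewrite <- !exp_plus. replace (ln (ch x) / 3 + ln (ch x) / 3 + ln (ch x) / 3) with (ln (ch x)) by field.
    apply exp_ln, ch_pos. }
  assert (HE : E x = / u). { unfold E, u. apply exp_Ropp. }
  rewrite HE in Hk. assert (x * u <= sh x).
  { apply Rmult_le_reg_r with (/ u). apply Rinv_0_lt_compat; auto.
    replace (x * u * / u) with x by (field; lra). lra. }
  rewrite <- Hu3. assert (0 <= x * u) by nra.
  replace (x * x * x * (u * u * u)) with ((x*u)*(x*u)*(x*u)) by ring.
  replace ((x*u)*(x*u)*(x*u)) with ((x*u)^3) by ring.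
  replace (sh x * sh x * sh x) with ((sh x)^3) by ring. apply pow_incr; lra.
Qed.

Lemma p3_pos_neg x : 0 < x -> p3 x <= 0.
Proof.
  intros Hx. pose proof (cube_ineq x Hx). pose proof (sh_pos x Hx). unfold p3.
  replace (-2 / (x * x * x) + 2 * ch x / (sh x * sh x * sh x)) with
    (2 * (x * x * x * ch x - sh x * sh x * sh x) / ((x * x * x) * (sh x * sh x * sh x))) by (field; lra).
  assert (0 < (x * x * x) * (sh x * sh x * sh x)).
  { assert (0 < x * x * x) by (apply Rmult_lt_0_compat; [apply Rmult_lt_0_compat|]; lra). assert (0 < sh x * sh x * sh x) by (apply Rmult_lt_0_compat; [apply Rmult_lt_0_compat|]; lra). apply Rmult_lt_0_compat; lra. }
  set (D := (x * x * x) * (sh x * sh x * sh x)) in *.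
  set (N := 2 * (x * x * x * ch x - sh x * sh x * sh x)).
  assert (0 <= (- N) * / D) by (apply Rmult_le_pos; [unfold N; lra| apply Rlt_le, Rinv_0_lt_compat; auto]).
  replace (N / D) with (- ((- N) * / D)) by (field; lra). lra.
Qed.

Lemma p3_odd x : p3 (- x) = - p3 x.
Proof. unfold p3. rewrite sh_opp, ch_opp. destruct (Req_dec x 0) as [->|Hx].
  rewrite sh0, ch0, ?Ropp_0. unfold Rdiv. rewrite ?Ropp_0, ?Rmult_0_l, ?Rmult_0_r, ?Rinv_0. ring.
  pose proof (sh_nz x Hx). field; auto. Qed.

Lemma p1_odd x : p1 (- x) = - p1 x.
Proof. unfold p1. destruct (Req_EM_T (-x) 0); destruct (Req_EM_T x 0); try lra.
  rewrite sh_opp, ch_opp. pose proof (sh_nz x n0). field; auto. Qed.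

Lemma p1_bound x : 0 < x -> Rabs (p1 x - 1) <= 1 / x.
Proof.
  intros Hx. unfold p1. destruct (Req_EM_T x 0); [lra|]. unfold ch, sh.
  pose proof (exp_ineq1 (2 * x) ltac:(lra)).
  assert (HP : exp (2*x) = exp x * exp x) by (rewrite <- exp_plus; f_equal; ring).
  rewrite exp_Ropp. pose proof (exp_pos x). set (P := exp x) in *.
  assert (1 < P * P) by lra.
  replace ((P + / P) / 2 / ((P - / P) / 2) - 1 / x - 1) with (2 / (P * P - 1) - 1 / x) by (field; nra).
  assert (0 < 2 / (P*P - 1)) by (apply Rdiv_lt_0_compat; lra).
  assert (2 / (P * P - 1) <= 1 / x).
  { apply Rmult_le_reg_r with ((P*P-1) * x). nra. field_simplify; nra. }
  assert (0 < 1 / x) by (apply Rdiv_lt_0_compat; lra).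
  apply Rabs_le. lra.
Qed.


Section Main.
Variables a b : R.
Hypothesis ha : 0 < a.
Hypothesis hab : a < b.

Let al := ln a.
Let be := ln b.
Let c := (al + be) / 2.
Let dl := (be - al) / 2.

Lemma dl_pos : 0 < dl.
Proof. unfold dl, al, be. pose proof (ln_increasing a b ha hab). lra. Qed.

Lemma exp_split t : exp (t * be) = exp (t * c) * exp (dl * t) /\ exp (t * al) = exp (t * c) * exp (- (dl * t)).
Proof.
  split; rewrite <- exp_plus; f_equal; unfold c, dl; field.
Qed.

Lemma g_id t : t <> 0 -> g_ab a b t = exp (t * c) * (2 * dl) * Sx (dl * t).
Proof.
  intros Ht. pose proof dl_pos. unfold g_ab. destruct (Req_EM_T t 0); [contradiction|].
  unfold Rpower. fold al be. destruct (exp_split t) as [E1 E2]. rewrite E1, E2.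
  unfold Sx, sh. field. split; lra.
Qed.

Lemma g_pos t : 0 < g_ab a b t.
Proof.
  destruct (Req_dec t 0) as [->|Ht].
  - unfold g_ab. destruct (Req_EM_T 0 0); [|lra]. pose proof (ln_increasing a b ha hab). lra.
  - rewrite g_id; auto. pose proof dl_pos. pose proof (exp_pos (t * c)).
    assert (dl * t <> 0) by (apply Rmult_integral_contrapositive; split; lra).
    pose proof (S_pos _ H1). apply Rmult_lt_0_compat; [apply Rmult_lt_0_compat|]; lra.
Qed.

Lemma lng_id t : lng_ab a b t = t * c + ln (2 * dl) + phi (dl * t).
Proof.
  pose proof dl_pos. unfold lng_ab. destruct (Req_dec t 0) as [->|Ht].
  - rewrite Rmult_0_r. unfold phi, g_ab. destruct (Req_EM_T 0 0); [|lra].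
    replace (2 * dl) with (ln b - ln a) by (unfold dl, al, be; field). ring.
  - assert (dl * t <> 0) by (apply Rmult_integral_contrapositive; split; lra).
    rewrite g_id; auto. unfold phi. destruct (Req_EM_T (dl * t) 0); [contradiction|].
    pose proof (S_pos _ H0). pose proof (exp_pos (t * c)).
    rewrite !ln_mult; try lra. rewrite ln_exp. ring.
    all: try (apply Rmult_lt_0_compat; lra).
Qed.

Lemma h_id t : h_ab a b t = c + dl * p1 (dl * t).
Proof.
  pose proof dl_pos. unfold h_ab. destruct (Req_EM_T t 0) as [->|Ht].
  - rewrite Rmult_0_r. unfold p1. destruct (Req_EM_T 0 0); [|lra].
    rewrite <- Rpower_sqrt by (apply Rmult_lt_0_compat; lra). unfold Rpower.
    rewrite ln_exp, ln_mult by lra. unfold c, al, be. field.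
  - assert (dl * t <> 0) by (apply Rmult_integral_contrapositive; split; lra).
    unfold p1. destruct (Req_EM_T (dl * t) 0); [contradiction|].
    pose proof (sh_nz _ H0). unfold ch, sh in *.
    unfold Rpower. fold al be. destruct (exp_split t) as [E1 E2]. rewrite E1, E2.
    pose proof (exp_pos (t * c)).
    assert (exp (dl * t) - exp (- (dl * t)) <> 0) by (intro Z; apply H1; rewrite Z; field).
    replace al with (c - dl) by (unfold c, dl; field).
    replace be with (c + dl) by (unfold c, dl; field).
    field. repeat split; try lra. 
    intro Z. apply H3. apply Rmult_eq_reg_l with (exp (t * c)); lra.
Qed.

Lemma D_lng t : dpl (lng_ab a b) t (h_ab a b t).
Proof.
  apply (D_ext (fun t => t * c + ln (2 * dl) + phi (dl * t))).
  intros; symmetry; apply lng_id.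
  eapply D_eq. apply D_plus. apply D_plus. apply D_mult. apply D_id. apply D_const. apply D_const.
  apply (D_comp (fun t => dl * t) phi). eapply D_eq. apply D_mult. apply D_const. apply D_id. reflexivity.
  apply Dphi. rewrite h_id. ring.
Qed.

End Main.


Theorem theorem1 (a b : R) (ha : 0 < a) (hab : a < b) :
  (forall t, 0 < g_ab a b t) /\
  (exists d1 d2 d3 : R -> R,
     (forall t, derivable_pt_lim (lng_ab a b) t (d1 t)) /\
     (forall t, derivable_pt_lim d1 t (d2 t)) /\
     (forall t, t <> 0 -> derivable_pt_lim d2 t (d3 t)) /\
     (forall t, 0 <= d2 t) /\
     (forall t, t < 0 -> 0 <= d3 t) /\
     (forall t, 0 < t -> d3 t <= 0)) /\
  (forall t, derivable_pt_lim (lng_ab a b) t (h_ab a b t)) /\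
  (forall s t, s < t -> h_ab a b s < h_ab a b t) /\
  (forall eps, 0 < eps -> exists M, forall t, t < M -> Rabs (h_ab a b t - ln a) < eps) /\
  (forall eps, 0 < eps -> exists M, forall t, M < t -> Rabs (h_ab a b t - ln b) < eps).
Proof.
  pose proof (dl_pos a b ha hab) as Hd.
  pose proof (h_id a b ha hab) as Hh.
  set (dl := (ln b - ln a) / 2) in *. set (c := (ln a + ln b) / 2) in *.
  split; [apply g_pos; auto|].
  split.
  { exists (h_ab a b), (fun t => dl * dl * p2 (dl * t)), (fun t => dl * dl * dl * p3 (dl * t)).
    split; [apply D_lng; auto|].
    split.
    { intro t. apply (D_ext (fun t => c + dl * p1 (dl * t))). intros; symmetry; apply Hh.
      eapply D_eq. apply D_plus. apply D_const. apply D_mult. apply D_const.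
      apply (D_comp (fun t => dl * t) p1). eapply D_eq. apply D_mult. apply D_const. apply D_id. reflexivity.
      apply Dp1. cbv beta; ring. }
    split.
    { intros t Ht. assert (dl * t <> 0) by (apply Rmult_integral_contrapositive; split; lra).
      eapply D_eq. apply D_mult. apply D_const.
      apply (D_comp (fun t => dl * t) p2). eapply D_eq. apply D_mult. apply D_const. apply D_id. reflexivity.
      apply Dp2_nz; auto. cbv beta; ring. }
    split.
    { intro t. pose proof (p2_pos (dl * t)). apply Rmult_le_pos; [|lra]. apply Rmult_le_pos; lra. }
    split.
    { intros t Ht. assert (0 < - (dl * t)) by nra. pose proof (p3_pos_neg _ H).
      rewrite p3_odd in H0. apply Rmult_le_pos; [|lra]. apply Rmult_le_pos; [apply Rmult_le_pos|]; lra. }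
    { intros t Ht. assert (0 < dl * t) by nra. pose proof (p3_pos_neg _ H).
      assert (0 < dl * dl * dl) by (apply Rmult_lt_0_compat; [apply Rmult_lt_0_compat|]; lra). nra. } }
  split; [apply D_lng; auto|].
  split.
  { intros s t Hst. rewrite !Hh. pose proof (p1_incr (dl * s) (dl * t) ltac:(nra)). nra. }
  split.
  { intros eps He. exists (- (1 / eps)). intros t Ht.
    assert (Hpe : 0 < 1 / eps) by (apply Rdiv_lt_0_compat; lra).
    assert (Hu : 0 < - (dl * t)) by nra.
    pose proof (p1_bound _ Hu). rewrite p1_odd in H. rewrite Hh.
    replace (c + dl * p1 (dl * t) - ln a) with (- (dl * (- p1 (dl * t) - 1))) by (unfold c, dl; field).
    rewrite Rabs_Ropp, Rabs_mult, (Rabs_right dl) by lra.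
    apply Rle_lt_trans with (dl * (1 / - (dl * t))). apply Rmult_le_compat_l; lra.
    replace (dl * (1 / - (dl * t))) with (1 / - t) by (field; lra).
    assert (1 / eps < - t) by lra.
    apply Rmult_lt_reg_r with (-t). lra. replace (1 / - t * - t) with 1 by (field; lra).
    apply Rmult_lt_reg_r with (/ eps). apply Rinv_0_lt_compat; lra.
    replace (eps * - t * / eps) with (- t) by (field; lra). lra. }
  { intros eps He. exists (1 / eps). intros t Ht.
    assert (Hpe : 0 < 1 / eps) by (apply Rdiv_lt_0_compat; lra).
    assert (Hu : 0 < dl * t) by nra.
    pose proof (p1_bound _ Hu). rewrite Hh.
    replace (c + dl * p1 (dl * t) - ln b) with (dl * (p1 (dl * t) - 1)) by (unfold c, dl; field).
    rewrite Rabs_mult, (Rabs_right dl) by lra.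
    apply Rle_lt_trans with (dl * (1 / (dl * t))). apply Rmult_le_compat_l; lra.
    replace (dl * (1 / (dl * t))) with (1 / t) by (field; lra).
    apply Rmult_lt_reg_r with t. lra. replace (1 / t * t) with 1 by (field; lra).
    apply Rmult_lt_reg_r with (/ eps). apply Rinv_0_lt_compat; lra.
    replace (eps * t * / eps) with t by (field; lra). lra. }
Qed.
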